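(* Under the Standing Setup and Assumption (G) described in the context, let $g$ be any Boolean function of $k$ variables of the form $$g(x_1,\ldots,x_k)=\bigoplus_{i=1}^s g_i(x_{\ell_i+1},\ldots,x_{\ell_{i+1}}),$$ where each $g_i$ is an arbitrary Boolean function of $\ell_{i+1}-\ell_i$ variables, and regard $g$ as a function on $\mathbf{F}_2^n$ depending only on the first $k$ coordinates. Then $$\mathcal{E}(PC_{f,\mathcal{T}})\ \ge\ \big[\mathcal{E}(f\oplus g)\big]^{2^s}.$$
   Context: Standing Setup. $f:\mathbf{F}_2^n\to\mathbf{F}_2$ is a Boolean function. $\mathbf{x}_1,\ldots,\mathbf{x}_n$ are binary sequences, $\mathbf{x}_j=(x_j(t))_{t\ge0}$, with $\mathbf{x}_j$ periodic of period $T_j$, i.e. $x_j(t)=x_j(t \bmod T_j)$. Let $s\ge1$ and integers $0=\ell_1<\ell_2<\cdots<\ell_{s+1}=k\le n$; variable $j$ belongs to block $i$ if $\ell_i<j\le\ell_{i+1}$. For $1\le i\le s$, $M_i=q_i\,\mathrm{lcm}(T_{\ell_i+1},\ldots,T_{\ell_{i+1}})$ with $q_i$ a positive integer. For $c=\sum_{i=1}^s c_i2^{i-1}\in\{0,\ldots,2^s-1\}$ with $c_i\in\{0,1\}$, put $\tau_c=\sum_{i=1}^s c_iM_i$, and $\mathcal{T}=\{\tau_c\}$. The parity-check sequence is $PC_{f,\mathcal{T}}(t)=\bigoplus_{c=0}^{2^s-1} f\big(x_1(t+\tau_c),\ldots,x_n(t+\tau_c)\big)$. The bias of a Boolean function $h$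 of $m$ variables is $\mathcal{E}(h)=2^{-m}\sum_{x\in\mathbf{F}_2^m}(-1)^{h(x)}$. The bias $\mathcal{E}(PC_{f,\mathcal{T}})$ is the bias of $PC_{f,\mathcal{T}}(t)$ (for a fixed $t\ge0$) viewed as a Boolean function of the $T_1+\cdots+T_n$ bits $x_j(0),\ldots,x_j(T_j-1)$, $1\le j\le n$; equivalently $\mathcal{E}(PC_{f,\mathcal{T}})=\mathbb{E}[(-1)^{PC_{f,\mathcal{T}}(t)}]$ when these bits are independent and uniformly distributed. Assumption (G): (i) for every $j$ with $k<j\le n$, the $2^s$ integers $\tau_c$ are pairwise incongruent modulo $T_j$ (in particular no nonzero element of $\mathcal{T}$ is a multiple of $T_j$); (ii) for every $i\in\{1,\ldots,s\}$ and every $j$ in block $i$, the $2^{s-1}$ integers $\sum_{l\ne i}c_lM_l$ ($c_l\in\{0,1\}$) are pairwise incongruent modulo $T_j$. *)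

(* Defs.v *)
From HB Require Import structures.
From mathcomp Require Import all_boot all_order all_algebra.
Set Implicit Arguments. Unset Strict Implicit. Unset Printing Implicit Defensive.
Import Order.TTheory GRing.Theory Num.Theory.

Definition bias (D : finType) (h : D -> bool) : rat :=
  ((\sum_(x : D) (-1) ^+ h x) / (#|D|%:R))%R.

(* The free bits x_j(0), ..., x_j(T j - 1) for 0 <= j < n (0-based). *)
Definition bits (n : nat) (T : nat -> nat) : finType :=
  {ffun {j : 'I_n & 'I_(T j)} -> bool}.

Definition xseq (n : nat) (T : nat -> nat) (X : bits n T) (j : 'I_n) (t : nat)
  : bool :=
  oapp (fun i : 'I_(T j) => X (Tagged (fun j : 'I_n => 'I_(T j)) i)) false
       (insub (t %% T j)).

(* Coordinate j (a nat) of a point of F_2^n, false if out of range. *)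
Definition coord (n : nat) (x : {ffun 'I_n -> bool}) (j : nat) : bool :=
  oapp x false (insub j).

(* M_i = q_i * lcm(T_j : j in block i), block i = {j | l i <= j < l (i+1)}
   (0-based blocks and variables). *)
Definition Mblk (T l q : nat -> nat) (i : nat) : nat :=
  q i * \big[lcmn/1]_(l i <= j < l i.+1) T j.

Definition tau (s : nat) (T l q : nat -> nat) (c : {set 'I_s}) : nat :=
  \sum_(i < s | i \in c) Mblk T l q i.

Definition PC (n s : nat) (T l q : nat -> nat)
  (f : {ffun 'I_n -> bool} -> bool) (t : nat) (X : bits n T) : bool :=
  \big[addb/false]_(c : {set 'I_s})
     f [ffun j => xseq X j (t + tau T l q c)].

Definition gsum (n s : nat) (l : nat -> nat)
  (gi : forall i : 'I_s, {ffun 'I_(l i.+1 - l i) -> bool} -> bool)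
  (x : {ffun 'I_n -> bool}) : bool :=
  \big[addb/false]_(i < s) gi i [ffun m : 'I_(l i.+1 - l i) => coord x (l i + m)].

(* Main.v *)
Require Import Defs.
From HB Require Import structures.
From mathcomp Require Import all_boot all_order all_algebra.
Import Order.TTheory GRing.Theory Num.Theory.
Set Implicit Arguments. Unset Strict Implicit. Unset Printing Implicit Defensive.

Section PartA.
Local Open Scope ring_scope.


Section Merge.
Variables (I Y : finType).
Definition merge (P : pred I) (y z : {ffun I -> Y}) : {ffun I -> Y} :=
  [ffun i => if P i then y i else z i].

Lemma merge_sum P (H : {ffun I -> Y} -> rat) :
  \sum_y \sum_z H (merge P y z) = #|{ffun I -> Y}|%:R * \sum_y H y.
Proof.
rewrite pair_bigA /=.
pose g (p : {ffun I -> Y} * {ffun I -> Y}) := (merge P p.1 p.2, merge P p.2 p.1).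
have gK : involutive g.
  by case=> y z; rewrite /g /=; congr (_, _); apply/ffunP=> i; rewrite !ffunE; case: (P i).
rewrite (reindex_inj (inv_inj gK)) /=.
have -> : \sum_p H (merge P (g p).1 (g p).2) = \sum_(p : {ffun I -> Y} * {ffun I -> Y}) H p.1.
  apply: eq_bigr => -[y z] _; congr H; apply/ffunP=> i; rewrite /g /= !ffunE.
  by case: (P i).
rewrite -(pair_bigA _ (fun y z => H y)) /= mulr_natl -sumrMnl.
by apply: eq_bigr => y _; rewrite sumr_const card_ffun.
Qed.

Lemma merge_indep P (F G : {ffun I -> Y} -> rat) :
  (forall y z, F (merge P y z) = F y) -> (forall y z, G (merge P y z) = G z) ->
  (\sum_y F y) * (\sum_z G z) = #|{ffun I -> Y}|%:R * \sum_y F y * G y.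
Proof.
move=> HF HG; rewrite -(merge_sum P) big_distrl /=; apply: eq_bigr => y _.
rewrite big_distrr /=; apply: eq_bigr => z _; by rewrite HF HG.
Qed.
End Merge.

End PartA.

Section PartB.
Local Open Scope ring_scope.


Lemma cauchy_sum (I : finType) (V : I -> rat) :
  (\sum_i V i) ^+ 2 <= #|I|%:R * \sum_i V i ^+ 2.
Proof.
have H : \sum_i \sum_j (V i - V j) ^+ 2 =
   (#|I|%:R * \sum_i V i ^+ 2 - (\sum_i V i) ^+ 2) *+ 2.
  have E1 : forall i j, (V i - V j) ^+ 2 = (V i ^+ 2 + V j ^+ 2) - (V i * V j) *+ 2.
    by move=> i j; rewrite sqrrB addrAC.
  under eq_bigr => i _ do under eq_bigr => j _ do rewrite E1.
  under eq_bigr => i _ do rewrite sumrB big_split /=.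
  rewrite sumrB big_split /= sumr_const.
  rewrite exchange_big /= sumr_const -mulr2n.
  rewrite expr2 big_distrl /= mulrnBl; congr (_ - _).
    by rewrite mulr_natl.
  rewrite -sumrMnl; apply: eq_bigr => i _.
  by rewrite sumrMnl big_distrr.
have : 0 <= \sum_i \sum_j (V i - V j) ^+ 2.
  by apply: sumr_ge0 => i _; apply: sumr_ge0 => j _; apply: sqr_ge0.
by rewrite H pmulrn_lge0 // subr_ge0.
Qed.

Lemma final_arith (N X P Q : rat) : 0 < N -> N * Q = X ^+ 2 ->
  (N * X) ^+ 2 <= N * (N * (N * P)) -> Q <= P.
Proof.
move=> Np E C; rewrite exprMn -E expr2 -!mulrA ler_pM2l // ler_pM2l // in C.
by rewrite -(ler_pM2l Np).
Qed.

End PartB.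

Section PartC.
Local Open Scope ring_scope.


Section Embed.
Variables (I J Y : finType) (e : J -> I).
Hypothesis einj : injective e.
Definition extf (X : {ffun I -> Y}) (Z : {ffun J -> Y}) : {ffun I -> Y} :=
  [ffun i => if [pick j | e j == i] is Some j then Z j else X i].
Definition restr (X : {ffun I -> Y}) : {ffun J -> Y} := [ffun j => X (e j)].
Lemma restr_ext X Z : restr (extf X Z) = Z.
Proof.
apply/ffunP=> j; rewrite !ffunE; case: pickP => [j' /eqP/einj -> //|].
by move/(_ j); rewrite eqxx.
Qed.
Lemma ext_restr X Z : extf (extf X Z) (restr X) = X.
Proof.
apply/ffunP=> i; rewrite !ffunE; case: pickP => [j' /eqP <-|_]; by rewrite ?ffunE.
Qed.
Lemma embed_sum (H : {ffun J -> Y} -> rat) :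
  #|{ffun I -> Y}|%:R * \sum_Z H Z = #|{ffun J -> Y}|%:R * \sum_X H (restr X).
Proof.
have -> : #|{ffun I -> Y}|%:R * \sum_Z H Z = \sum_X \sum_Z H (restr (extf X Z)).
  rewrite mulr_natl; under [RHS]eq_bigr => X _ do under eq_bigr => Z _ do rewrite restr_ext.
  by rewrite sumr_const.
rewrite pair_bigA /=.
pose g (p : {ffun I -> Y} * {ffun J -> Y}) := (extf p.1 p.2, restr p.1).
have gK : involutive g.
  by case=> X Z; rewrite /g /= ext_restr restr_ext.
rewrite (reindex_inj (inv_inj gK)) /=.
under eq_bigr => p _ do rewrite /g /= ext_restr.
rewrite -(pair_bigA _ (fun X Z => H (restr X))) /= mulr_natl -sumrMnl.
by apply: eq_bigr => X _; rewrite sumr_const.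
Qed.
End Embed.

End PartC.

Section PartD.
Local Open Scope ring_scope.


Section Box.
Variables (K : finType) (s : nat) (phi : {ffun K -> bool} -> rat).
Local Notation I := (K * {set 'I_s})%type.
Local Notation Om := {ffun I -> bool}.
Definition xc (A : K -> {set 'I_s}) (y : Om) (c : {set 'I_s}) : {ffun K -> bool} :=
  [ffun k => y (k, c :\: A k)].
Definition Phi A := \sum_(y : Om) \prod_c phi (xc A y c).
Definition tog (m : 'I_s) (c : {set 'I_s}) := if m \in c then c :\ m else m |: c.
Lemma togK m : involutive (tog m).
Proof.
move=> c; rewrite /tog; case mc: (m \in c); rewrite !inE eqxx /=;
  by apply/setP=> x; rewrite !inE; case: eqP => // ->; rewrite mc.
Qed.
Lemma in_tog m (c : {set 'I_s}) : (m \in tog m c) = (m \notin c).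
Proof. by rewrite /tog; case: ifP; rewrite !inE eqxx => ->. Qed.
Lemma tog_notin m (c : {set 'I_s}) : m \notin c -> tog m c = m |: c.
Proof. by rewrite /tog => /negbTE ->. Qed.

Definition swap m (y : Om) : Om := [ffun p => y (p.1, tog m p.2)].
Lemma swap_sum m (H : Om -> rat) : \sum_y H (swap m y) = \sum_y H y.
Proof.
have sK : involutive (swap m).
  by move=> y; apply/ffunP=> -[k c]; rewrite !ffunE /= togK.
by rewrite [RHS](reindex_inj (inv_inj sK)).
Qed.
Definition lowP (m : 'I_s) : pred I := fun p => m \notin p.2.
Definition QP (A : K -> {set 'I_s}) (m : 'I_s) : pred I := fun p => m \in A p.1.
Definition U (A : K -> {set 'I_s}) (m : 'I_s) (y : Om) := \prod_(c : {set 'I_s} | m \notin c) phi (xc A y c).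

Lemma set_eq1 (m : 'I_s) (c : {set 'I_s}) (B : {set 'I_s}) : m \in B -> (m |: c) :\: B = c :\: B.
Proof. by move=> mB; apply/setP=> x; rewrite !inE; case: eqP => // ->; rewrite mB. Qed.
Lemma set_eq2 (m : 'I_s) (c : {set 'I_s}) (B : {set 'I_s}) : m \notin B -> (m |: c) :\: B = m |: (c :\: B).
Proof. by move=> mB; apply/setP=> x; rewrite !inE; case: eqP => // ->; rewrite mB. Qed.
Lemma set_eq3 (m : 'I_s) (c : {set 'I_s}) (B : {set 'I_s}) : (m |: c) :\: (B :\ m) = m |: (c :\: B).
Proof. by apply/setP=> x; rewrite !inE; case: eqP. Qed.
Lemma set_eq4 (m : 'I_s) (c : {set 'I_s}) (B : {set 'I_s}) : m \notin c -> c :\: (B :\ m) = c :\: B.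
Proof.
by move=> mc; apply/setP=> x; rewrite !inE; case: eqP => // ->; rewrite (negbTE mc) !andbF.
Qed.

Lemma prod_split (m : 'I_s) (F : {set 'I_s} -> rat) :
  \prod_c F c = (\prod_(c : {set 'I_s} | m \notin c) F c) * \prod_(c : {set 'I_s} | m \notin c) F (m |: c).
Proof.
rewrite (bigID (fun c : {set 'I_s} => m \notin c)) /=; congr (_ * _).
rewrite (reindex_inj (inv_inj (togK m))) /=.
apply: eq_big => c; first by rewrite in_tog negbK.
by rewrite in_tog negbK => mc; rewrite tog_notin.
Qed.

Lemma Phi_split A m :
  Phi A = \sum_y U A m y * U A m (merge (QP A m) y (swap m y)).
Proof.
apply: eq_bigr => y _; rewrite (prod_split m); congr (_ * _).
apply: eq_bigr => c mc; congr phi; apply/ffunP=> k; rewrite !ffunE /QP /=.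
case: ifP => mA; first by rewrite set_eq1.
by rewrite set_eq2 ?(negbT mA) // tog_notin // inE (negbTE mc) andbF.
Qed.

Lemma Phi_split' A m :
  Phi (fun k => A k :\ m) = \sum_y U A m y * U A m (swap m y).
Proof.
apply: eq_bigr => y _; rewrite (prod_split m); congr (_ * _).
  apply: eq_bigr => c mc; congr phi; apply/ffunP=> k; by rewrite !ffunE set_eq4.
apply: eq_bigr => c mc; congr phi; apply/ffunP=> k; rewrite !ffunE /= set_eq3.
by rewrite tog_notin // inE (negbTE mc) andbF.
Qed.

Lemma dissolve A m : Phi (fun k => A k :\ m) <= Phi A.
Proof.
set N : rat := #|Om|%:R.
have Npos : 0 < N by rewrite ltr0n card_ffun expn_gt0 card_bool.
have D1 : forall y z, U A m (merge (lowP m) y z) = U A m y.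
  move=> y z; apply: eq_bigr => c mc; congr phi; apply/ffunP=> k.
  by rewrite !ffunE /lowP /= inE (negbTE mc) ?andbF.
have D2 : forall y z, U A m (swap m (merge (lowP m) y z)) = U A m (swap m z).
  move=> y z; apply: eq_bigr => c mc; congr phi; apply/ffunP=> k.
  by rewrite !ffunE /lowP /= in_tog inE (negbTE mc) ?andbF.
have E1 : N * Phi (fun k => A k :\ m) = (\sum_y U A m y) ^+ 2.
  rewrite Phi_split' -(merge_indep (P := lowP m)) //.
  by rewrite (swap_sum m (U A m)) expr2.
pose V y := \sum_z U A m (merge (QP A m) y z).
have E2 : \sum_y V y = N * \sum_y U A m y by rewrite /V merge_sum.
have E3 : \sum_y V y ^+ 2 = N * (N * Phi A).
  rewrite (Phi_split A m) -(merge_sum (QP A m) (fun w => U A m w * U A m (merge (QP A m) w (swap m w)))) big_distrr /=; apply: eq_bigr => y _.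
  rewrite expr2 /V -[X in _ * X](swap_sum m).
  rewrite (merge_indep (P := lowP m)); last first.
  - move=> z z'; apply: eq_bigr => c mc; congr phi; apply/ffunP=> k.
    rewrite !ffunE /QP /lowP /=; case: ifP => // _.
    by rewrite ?ffunE /= ?in_tog inE (negbTE mc) ?andbF.
  - move=> z z'; apply: eq_bigr => c mc; congr phi; apply/ffunP=> k.
    rewrite !ffunE /QP /lowP /=; case: ifP => // _.
    by rewrite ?ffunE /= ?in_tog inE (negbTE mc) ?andbF.
  congr (_ * _); apply: eq_bigr => z _; congr (_ * U A m _).
  apply/ffunP=> -[k c]; rewrite !ffunE /QP /=; case: ifP => // ->.
have CS := cauchy_sum V.
rewrite E2 E3 in CS; exact: (final_arith Npos E1 CS).
Qed.

Lemma Phi_ext A B : (forall k, A k = B k) -> Phi A = Phi B.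
Proof.
move=> AB; apply: eq_bigr => y _; apply: eq_bigr => c _; congr phi.
by apply/ffunP=> k; rewrite !ffunE AB.
Qed.

Lemma Phi_seq (r : seq 'I_s) A : Phi (fun k => A k :\: [set x in r]) <= Phi A.
Proof.
elim: r A => [|m r IH] A.
  rewrite (@Phi_ext _ A) // => k; apply/setP=> x; by rewrite !inE in_nil.
apply: le_trans (IH A).
rewrite (@Phi_ext _ (fun k => (A k :\: [set x in r]) :\ m)); first exact: dissolve.
move=> k; apply/setP=> x; rewrite !inE; by case: eqP; rewrite ?andbT.
Qed.

Lemma card_setT_s : #|{set 'I_s}| = (2 ^ s)%N.
Proof. by rewrite -cardsT -powersetT card_powerset cardsT card_ord. Qed.

Lemma Phi_empty : Phi (fun _ => set0) = (\sum_x phi x) ^+ (2 ^ s).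
Proof.
pose unc (f : {ffun {set 'I_s} -> {ffun K -> bool}}) : Om := [ffun p => f p.2 p.1].
pose cur (y : Om) : {ffun {set 'I_s} -> {ffun K -> bool}} :=
  [ffun c => [ffun k => y (k, c)]].
have uK : cancel unc cur.
  by move=> f; apply/ffunP=> c; apply/ffunP=> k; rewrite !ffunE.
have cK : cancel cur unc.
  by move=> y; apply/ffunP=> -[k c]; rewrite !ffunE.
rewrite /Phi (reindex unc); last by exists cur => ? _.
rewrite -card_setT_s -prodr_const bigA_distr_bigA /=.
apply: eq_bigr => f _; apply: eq_bigr => c _; congr phi.
by apply/ffunP=> k; rewrite !ffunE setD0.
Qed.

Lemma Phi0 A : (\sum_x phi x) ^+ (2 ^ s) <= Phi A.
Proof.
apply: le_trans (Phi_seq (enum 'I_s) A).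
rewrite -Phi_empty le_eqVlt; apply/orP; left; apply/eqP.
apply: Phi_ext => k; apply/setP=> x; by rewrite !inE mem_enum.
Qed.
End Box.

End PartD.


Lemma lcm_dvd (F : nat -> nat) a b j : a <= j < b ->
  F j %| \big[lcmn/1%N]_(a <= i < b) F i.
Proof.
move=> hj; rewrite (bigD1_seq j) ?mem_index_iota ?iota_uniq //=.
exact: dvdn_lcml.
Qed.

Lemma find_block (l : nat -> nat) j s' : l 0 = 0 -> j < l s' ->
  exists2 i, i < s' & l i <= j < l i.+1.
Proof.
move=> l0; elim: s' => [|s' IH]; first by rewrite l0.
case: (ltnP j (l s')) => [/IH [i hi hj] _|h1 h2]; first by exists i => //; apply: ltnW.
by exists s' => //; rewrite h1 h2.
Qed.

Section Main.
Variables (n s : nat) (T l q : nat -> nat).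
Variable (t : nat).
Definition Ablk (j : 'I_n) : {set 'I_s} := [set i : 'I_s | l i <= j < l i.+1].

Lemma tau_mod (j : 'I_n) (c : {set 'I_s}) :
  (t + tau T l q c) %% T j = (t + tau T l q (c :\: Ablk j)) %% T j.
Proof.
rewrite /tau (bigID (fun i => i \in Ablk j)) /=.
have -> : \sum_(i < s | (i \in c) && ~~ (i \in Ablk j)) Mblk T l q i =
          \sum_(i < s | i \in c :\: Ablk j) Mblk T l q i.
  by apply: eq_bigl => i; rewrite !inE andbC.
have : T j %| \sum_(i < s | (i \in c) && (i \in Ablk j)) Mblk T l q i.
  apply: dvdn_sum => i /andP [_]; rewrite inE => hi.
  by rewrite /Mblk dvdn_mull // lcm_dvd.
case/dvdnP=> p ->; by rewrite addnCA modnMDl.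
Qed.


Definition xcv (X : bits n T) (c : {set 'I_s}) : {ffun 'I_n -> bool} :=
  [ffun j => xseq X j (t + tau T l q c)].

Lemma xcv_mod X c j : xcv X c j = xcv X (c :\: Ablk j) j.
Proof. by rewrite !ffunE /xseq tau_mod [in RHS]tau_mod setDDl setUid. Qed.

Lemma gsum_cancel gi X :
  \big[addb/false]_(c : {set 'I_s}) @gsum n s l gi (xcv X c) = false.
Proof.
rewrite /gsum exchange_big /=.
rewrite big1 // => i _.
set w := fun c : {set 'I_s} =>
  gi i [ffun m : 'I_(l i.+1 - l i) => Defs.coord (xcv X c) (l i + m)].
have wE : forall c, w c = w (c :\ i).
  move=> c; rewrite /w; congr (gi i); apply/ffunP => m; rewrite !ffunE /Defs.coord.
  case: insubP => // j _ jv /=.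
  rewrite xcv_mod [RHS]xcv_mod; congr (xcv X _ j).
  have hi : i \in Ablk j by rewrite inE jv leq_addr -ltn_subRL ltn_ord.
  apply/setP => x; rewrite !in_setD in_set1; case: eqP => // ->; by rewrite hi.
rewrite (eq_bigr (fun c => w c)) // (bigID (fun c : {set 'I_s} => i \in c)) /=.
rewrite (reindex_inj (inv_inj (togK i))) /=.
rewrite (eq_big (fun c : {set 'I_s} => i \notin c) (fun c => w c)); first exact: addbb.
  by move=> c; rewrite in_tog.
move=> c; rewrite in_tog => ic; rewrite tog_notin // wE; congr w.
by rewrite setU1K.
Qed.

Lemma PC_eq f gi X :
  @PC n s T l q f t X = \big[addb/false]_c (f (xcv X c) (+) @gsum n s l gi (xcv X c)).
Proof. by rewrite big_split /= gsum_cancel addbF. Qed.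

End Main.


Section PartE2.
Local Open Scope ring_scope.

Lemma sign_big (I : finType) (b : I -> bool) :
  (-1) ^+ (\big[addb/false]_i b i) = \prod_i (-1) ^+ b i :> rat.
Proof.
have e0 : (-1) ^+ false = 1 :> rat by rewrite expr0.
by rewrite (big_morph (fun x : bool => (-1) ^+ x : rat) (@signr_addb _) e0).
Qed.


Lemma arith_div (a b c S P Q : rat) : 0 < a -> 0 < b -> 0 < c ->
  a * S = b * P -> c * S = b * Q -> P / a = Q / c.
Proof.
move=> ha hb hc E1 E2.
have hb0 : b != 0 by rewrite gt_eqF.
apply: (mulfI hb0); rewrite !mulrA -E1 -E2 [a * S]mulrC [c * S]mulrC -!mulrA.
by rewrite !mulfV ?gt_eqF.
Qed.

Section Main2.
Variables (n s k : nat) (T l q : nat -> nat) (t : nat).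
Hypothesis hT : forall j : 'I_n, (0 < T j)%N.

Definition canon (p : 'I_n * {set 'I_s}) := p.2 :&: Ablk s l p.1 == set0.
Definition Jt := {p : 'I_n * {set 'I_s} | canon p}.

Definition e1 (u : Jt) : {j : 'I_n & 'I_(T j)} :=
  Tagged (fun j : 'I_n => 'I_(T j))
    (Ordinal (ltn_pmod (t + tau T l q (val u).2) (hT (val u).1))).

Definition Hf (phi : {ffun 'I_n -> bool} -> rat) (Z : {ffun Jt -> bool}) : rat :=
  \prod_(c : {set 'I_s}) phi [ffun j => oapp Z false (insub (j, c :\: Ablk s l j) : option Jt)].

Lemma canon_setD j c : canon (j, c :\: Ablk s l j).
Proof.
apply/eqP; apply/setP => x; rewrite in_setI in_setD in_set0 /=.
by case: (x \in Ablk s l j); rewrite ?andbF.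
Qed.

Lemma fact1 phi (X : bits n T) :
  \prod_(c : {set 'I_s}) phi (xcv l q t X c) = Hf phi (restr e1 X).
Proof.
apply: eq_bigr => c _; congr phi; apply/ffunP=> j.
rewrite !ffunE (insubT _ (canon_setD j c)) /= ffunE.
rewrite /xseq tau_mod (insubT (fun i => i < T j)%N (ltn_pmod _ (hT j))) /=.
by congr (X (Tagged _ _)); apply: val_inj.
Qed.

Lemma fact2 phi (y : {ffun 'I_n * {set 'I_s} -> bool}) :
  \prod_(c : {set 'I_s}) phi (xc (Ablk s l) y c) = Hf phi (restr (@sval _ _) y).
Proof.
apply: eq_bigr => c _; congr phi; apply/ffunP=> j.
by rewrite !ffunE (insubT _ (canon_setD j c)) /= ffunE.
Qed.


Lemma e1_inj (hl0 : l 0 = 0%N) (hls : l s = k)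
  (hG1 : forall j : 'I_n, (k <= j)%N -> forall c1 c2 : {set 'I_s},
     tau T l q c1 = tau T l q c2 %[mod T j] -> c1 = c2)
  (hG2 : forall (i : 'I_s) (j : 'I_n), (l i <= j < l i.+1)%N ->
     forall c1 c2 : {set 'I_s}, i \notin c1 -> i \notin c2 ->
     tau T l q c1 = tau T l q c2 %[mod T j] -> c1 = c2) :
  injective e1.
Proof.
move=> [[j1 c1] p1] [[j2 c2] p2] E.
have hj := congr1 (fun w => tag w) E; rewrite /= in hj.
have hv := congr1 (fun w => nat_of_ord (tagged w)) E; rewrite /= in hv.
move: p2 E hv; rewrite -hj => p2 E hv.
have hm : tau T l q c1 = tau T l q c2 %[mod T j1].
  by apply/eqP; rewrite -(eqn_modDl t); apply/eqP.
suff ec : c1 = c2.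
  by move: p2 E; rewrite -ec => p2 _; congr exist; apply: bool_irrelevance.
case: (leqP k j1) => hk; first exact: hG1 hk c1 c2 hm.
have hk' : (j1 < l s)%N by rewrite hls.
have [i hi hb] := find_block hl0 hk'.
have iA : Ordinal hi \in Ablk s l j1 by rewrite inE.
have nin : forall c, canon (j1, c) -> Ordinal hi \notin c.
  move=> c /eqP /setP /(_ (Ordinal hi)); rewrite in_setI in_set0 iA andbT /=.
  by move=> ->.
exact: (hG2 (Ordinal hi) j1 hb c1 c2 (nin _ p1) (nin _ p2) hm).
Qed.
End Main2.

End PartE2.

Unset Implicit Arguments.


Theorem theorem1 (n s k : nat) (T l q : nat -> nat)
  (f : {ffun 'I_n -> bool} -> bool)
  (gi : forall i : 'I_s, {ffun 'I_(l i.+1 - l i) -> bool} -> bool)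
  (t : nat)
  (hT : forall j : 'I_n, 0 < T j)
  (hs : 0 < s)
  (hl0 : l 0 = 0)
  (hlinc : forall i, i < s -> l i < l i.+1)
  (hls : l s = k)
  (hkn : k <= n)
  (hq : forall i, i < s -> 0 < q i)
  (hG1 : forall j : 'I_n, k <= j -> forall c1 c2 : {set 'I_s},
     tau T l q c1 = tau T l q c2 %[mod T j] -> c1 = c2)
  (hG2 : forall (i : 'I_s) (j : 'I_n), l i <= j < l i.+1 ->
     forall c1 c2 : {set 'I_s}, i \notin c1 -> i \notin c2 ->
     tau T l q c1 = tau T l q c2 %[mod T j] -> c1 = c2) :
  ((bias (fun x => f x (+) @gsum n s l gi x)) ^+ (2 ^ s)
     <= bias (@PC n s T l q f t))%R.
Proof.
pose phi := fun x : {ffun 'I_n -> bool} => ((-1) ^+ (f x (+) @gsum n s l gi x) : rat)%R.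
have e1i := @e1_inj n s k T l q t hT hl0 hls hG1 hG2.
have svi : injective (@sval _ (@canon n s l)) by exact: val_inj.
have S1 : (\sum_(X : bits n T) (-1) ^+ (@PC n s T l q f t X) =
           \sum_(X : bits n T) Hf phi (restr (@e1 n s T l q t hT) X))%R.
  by apply: eq_bigr => X _; rewrite (PC_eq q t f gi) sign_big -fact1.
have S2 : Phi phi (Ablk s l) = (\sum_y Hf phi (restr (@sval _ (@canon n s l)) y))%R.
  by apply: eq_bigr => y _; exact: fact2.
have E1 := embed_sum e1i (Hf phi).
have E2 := embed_sum svi (Hf phi).
have P0 := Phi0 phi (Ablk s l).
have cpos : forall I : finType, (0 < #|{ffun I -> bool}|%:R :> rat)%R.
  by move=> I; rewrite ltr0n card_ffun expn_gt0 card_bool.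
have AD := arith_div (cpos _) (cpos _) (cpos _) E1 E2.
rewrite /bias S1.
rewrite AD -S2 expr_div_n.
have CE : (#|{ffun 'I_n -> bool}|%:R ^+ (2 ^ s) =
           #|{ffun 'I_n * {set 'I_s} -> bool}|%:R :> rat)%R.
  by rewrite -natrX !card_ffun card_bool card_prod card_ord card_setT_s -expnM.
rewrite CE ler_pM2r ?invr_gt0 ?cpos //.
Qed.
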